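(* Let $\{H(\theta)\}_{\theta\in[0,s]}$ be a differentiable family of self-adjoint operators on a finite-dimensional Hilbert space such that each $H(\theta)$ has a unique ground state and spectral gap $\Delta(\theta)\ge\Delta>0$. Let $\Psi_0(\theta)$ be the differentiable family of normalized ground states satisfying the parallel transport condition $\langle\Psi_0(\theta)|\partial_\theta\Psi_0(\theta)\rangle=0$. Let $U_\Delta(\theta)$ solve $\partial_\theta U_\Delta(\theta)=i\,\mathcal S_\Delta(H(\theta),\partial_\theta H(\theta))\,U_\Delta(\theta)$, $U_\Delta(0)=\mathbb 1$. Then $\Psi_0(\theta)=U_\Delta(\theta)\Psi_0(0)$ for all $\theta\in[0,s]$.
   Context: Filter function: for $\Delta>0$, $W_\Delta:\mathbb R\to\mathbb R$ is a fixed function, continuous except at $t=0$ (where it is right-continuous with $W_\Delta(0)=1/2=\|W_\Delta\|_\infty$), odd away from $t=0$, with $\|W_\Delta\|_1\le K/\Delta$ for a constant $K$, decaying like $\exp(-c_0\Delta|t|/\ln^2(\Delta|t|))$, and whose Fourier transform $\hat W_\Delta(\lambda)=\int_{\mathbb R}W_\Delta(t)e^{i\lambda t}dt$ equals $i/\lambda$ for all $|\lambda|\ge\Delta$. For self-adjoint $H$ and an operator $A$, $\mathcal S_\Delta(H,A)=\int_{\mathbb R}W_\Delta(t)\,e^{itH}Ae^{-itH}\,dt$. *)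

(* Defs.v *)
From Stdlib Require Import Reals Arith.
Open Scope R_scope.

Definition C := (R * R)%type.
Definition Re (z : C) : R := fst z.
Definition Im (z : C) : R := snd z.
Definition C0 : C := (0, 0).
Definition C1 : C := (1, 0).
Definition Ci : C := (0, 1).
Definition RtoC (r : R) : C := (r, 0).
Definition Cadd (z w : C) : C := (Re z + Re w, Im z + Im w).
Definition Cmul (z w : C) : C :=
  (Re z * Re w - Im z * Im w, Re z * Im w + Im z * Re w).
Definition Cconj (z : C) : C := (Re z, - Im z).
Definition Cnorm2 (z : C) : R := Re z * Re z + Im z * Im z.

Fixpoint Csum (n : nat) (f : nat -> C) : C :=
  match n with
  | O => C0
  | S m => Cadd (Csum m f) (f m)
  end.

(* Only the entries with indices < n are meaningful. *)
Definition Vec := nat -> C.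
Definition Mat := nat -> nat -> C.

Definition mmul (n : nat) (A B : Mat) : Mat :=
  fun i j => Csum n (fun k => Cmul (A i k) (B k j)).
Definition mvmul (n : nat) (A : Mat) (v : Vec) : Vec :=
  fun i => Csum n (fun k => Cmul (A i k) (v k)).
Definition mscale (c : C) (A : Mat) : Mat := fun i j => Cmul c (A i j).
Definition vscale (c : C) (v : Vec) : Vec := fun i => Cmul c (v i).
Definition mid : Mat := fun i j => if Nat.eqb i j then C1 else C0.

Definition mat_eq (n : nat) (A B : Mat) : Prop :=
  forall i j, (i < n)%nat -> (j < n)%nat -> A i j = B i j.
Definition vec_eq (n : nat) (u v : Vec) : Prop :=
  forall i, (i < n)%nat -> u i = v i.

Definition inner (n : nat) (u v : Vec) : C :=
  Csum n (fun k => Cmul (Cconj (u k)) (v k)).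
Definition vnorm2 (n : nat) (v : Vec) : R := Re (inner n v v).
Definition vec_nonzero (n : nat) (v : Vec) : Prop :=
  exists k, (k < n)%nat /\ v k <> C0.

Definition self_adjoint (n : nat) (H : Mat) : Prop :=
  forall i j, (i < n)%nat -> (j < n)%nat -> H i j = Cconj (H j i).

Fixpoint mpow (n : nat) (A : Mat) (k : nat) : Mat :=
  match k with
  | O => mid
  | S m => mmul n (mpow n A m) A
  end.

Definition is_mexp (n : nat) (A E : Mat) : Prop :=
  forall i j, (i < n)%nat -> (j < n)%nat ->
    Un_cv (fun N => Re (Csum (S N) (fun k => Cmul (RtoC (/ INR (fact k))) (mpow n A k i j))))
          (Re (E i j)) /\
    Un_cv (fun N => Im (Csum (S N) (fun k => Cmul (RtoC (/ INR (fact k))) (mpow n A k i j))))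
          (Im (E i j)).

Definition has_deriv_on (a b : R) (f f' : R -> R) : Prop :=
  forall t, a <= t <= b ->
    forall eps, 0 < eps -> exists delta, 0 < delta /\
      forall u, a <= u <= b -> u <> t -> Rabs (u - t) < delta ->
        Rabs ((f u - f t) / (u - t) - f' t) < eps.

Definition C_has_deriv_on (a b : R) (f f' : R -> C) : Prop :=
  has_deriv_on a b (fun t => Re (f t)) (fun t => Re (f' t)) /\
  has_deriv_on a b (fun t => Im (f t)) (fun t => Im (f' t)).

Definition vec_has_deriv_on (n : nat) (a b : R) (v v' : R -> Vec) : Prop :=
  forall i, (i < n)%nat -> C_has_deriv_on a b (fun t => v t i) (fun t => v' t i).

Definition mat_has_deriv_on (n : nat) (a b : R) (A A' : R -> Mat) : Prop :=
  forall i j, (i < n)%nat -> (j < n)%nat ->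
    C_has_deriv_on a b (fun t => A t i j) (fun t => A' t i j).

Definition RInt_is (f : R -> R) (a b v : R) : Prop :=
  exists pr : Riemann_integrable f a b, RiemannInt pr = v.

Definition improper_int (f : R -> R) (v : R) : Prop :=
  forall eps, 0 < eps -> exists T, 0 < T /\
    forall a b, a <= - T -> T <= b ->
      exists w, RInt_is f a b w /\ Rabs (w - v) < eps.

Definition is_filter_function (Delta : R) (W : R -> R) : Prop :=
  (forall t, t <> 0 -> continuity_pt W t) /\
  W 0 = / 2 /\
  (forall eps, 0 < eps -> exists delta, 0 < delta /\
      forall t, 0 <= t < delta -> Rabs (W t - W 0) < eps) /\
  (forall t, Rabs (W t) <= / 2) /\
  (forall t, t <> 0 -> W (- t) = - W t) /\
  (exists K L, improper_int (fun t => Rabs (W t)) L /\ L <= K / Delta) /\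
  (exists c0 c1, 0 < c0 /\ 0 < c1 /\
      forall t, 2 <= Delta * Rabs t ->
        Rabs (W t) <= c1 * exp (- c0 * Delta * Rabs t / (ln (Delta * Rabs t)) ^ 2)) /\
  (* Fourier transform: int W(t) e^{i lambda t} dt = i / lambda for |lambda| >= Delta *)
  (forall lambda, Delta <= Rabs lambda ->
      improper_int (fun t => W t * cos (lambda * t)) 0 /\
      improper_int (fun t => W t * sin (lambda * t)) (/ lambda)).

(* S = S_Delta(H, A) = int W(t) e^{itH} A e^{-itH} dt  (entrywise) *)
Definition is_SDelta (n : nat) (W : R -> R) (H A S : Mat) : Prop :=
  exists E : R -> Mat,
    (forall t, is_mexp n (mscale (0, t) H) (E t)) /\
    forall i j, (i < n)%nat -> (j < n)%nat ->
      improper_int (fun t => W t * Re (mmul n (mmul n (E t) A) (E (- t)) i j)) (Re (S i j)) /\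
      improper_int (fun t => W t * Im (mmul n (mmul n (E t) A) (E (- t)) i j)) (Im (S i j)).

Definition unique_ground_state_with_gap (n : nat) (Delta : R) (H : Mat) (psi : Vec) : Prop :=
  exists E0 : R,
    vec_eq n (mvmul n H psi) (vscale (RtoC E0) psi) /\
    forall (E : C) (v : Vec), vec_nonzero n v ->
      vec_eq n (mvmul n H v) (vscale E v) ->
      (exists c : C, vec_eq n v (vscale c psi)) \/ E0 + Delta <= Re E.

(* Main.v *)
From Pilot Require Import Defs.
From Stdlib Require Import Reals Arith Lra Lia.
From Coquelicot Require Import Rcomplements Hierarchy RInt.
From mathcomp Require all_boot all_algebra Rstruct complex spectral.
Import Pilot.Defs.
Open Scope R_scope.

Definition Csub (z w : C) : C := (Re z - Re w, Im z - Im w).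
Definition Copp (z : C) : C := (- Re z, - Im z).

Lemma Cext : forall z w : C, Re z = Re w -> Im z = Im w -> z = w.
Proof. intros [a b] [c d]; simpl; unfold Re, Im; simpl; intros; subst; auto. Qed.

Ltac cunf := unfold Csub, Copp, Cadd, Cmul, Cconj, Cnorm2, C0, C1, Ci, RtoC, Re, Im in *; cbn [fst snd] in *.
Ltac cring := apply Cext; cunf; ring.

Lemma Re_mk a b : Re (a, b) = a. Proof. reflexivity. Qed.
Lemma Im_mk a b : Im (a, b) = b. Proof. reflexivity. Qed.

Lemma Csum_ext n f g : (forall k, (k < n)%nat -> f k = g k) -> Csum n f = Csum n g.
Proof. induction n; simpl; intros H; auto. rewrite IHn by (intros; apply H; lia). rewrite H by lia; auto. Qed.

Lemma Csum_add n f g : Csum n (fun k => Cadd (f k) (g k)) = Cadd (Csum n f) (Csum n g).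
Proof. induction n; simpl. cring. rewrite IHn. cring. Qed.

Lemma Csum_sub n f g : Csum n (fun k => Csub (f k) (g k)) = Csub (Csum n f) (Csum n g).
Proof. induction n; simpl. cring. rewrite IHn. cring. Qed.

Lemma Csum_scal_l n c f : Csum n (fun k => Cmul c (f k)) = Cmul c (Csum n f).
Proof. induction n; simpl. cring. rewrite IHn. cring. Qed.

Lemma Csum_scal_r n c f : Csum n (fun k => Cmul (f k) c) = Cmul (Csum n f) c.
Proof. induction n; simpl. cring. rewrite IHn. cring. Qed.

Lemma Csum_conj n f : Csum n (fun k => Cconj (f k)) = Cconj (Csum n f).
Proof. induction n; simpl. cring. rewrite IHn. cring. Qed.

Lemma Csum_zero n f : (forall k, (k < n)%nat -> f k = C0) -> Csum n f = C0.
Proof. induction n; simpl; intros H; auto. rewrite IHn by (intros; apply H; lia). rewrite H by lia. cring. Qed.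

Lemma Csum_exch n m (f : nat -> nat -> C) :
  Csum n (fun i => Csum m (fun j => f i j)) = Csum m (fun j => Csum n (fun i => f i j)).
Proof.
  induction n; simpl.
  - symmetry; apply Csum_zero; auto.
  - rewrite IHn. rewrite <- Csum_add. reflexivity.
Qed.

Lemma Csum_delta n j f : (j < n)%nat ->
  Csum n (fun k => if Nat.eqb k j then f k else C0) = f j.
Proof.
  induction n; intros Hj; simpl. lia.
  destruct (Nat.eq_dec j n).
  - subst. rewrite Nat.eqb_refl. rewrite Csum_zero. cring.
    intros k Hk. destruct (Nat.eqb_spec k n); [lia|auto].
  - rewrite IHn by lia. destruct (Nat.eqb_spec n j); [lia|]. cring.
Qed.

Lemma Csum_delta' n j f : (j < n)%nat ->
  Csum n (fun k => if Nat.eqb j k then f k else C0) = f j.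
Proof.
  intros. rewrite <- (Csum_delta n j f) by auto. apply Csum_ext; intros.
  rewrite Nat.eqb_sym; auto.
Qed.



Fixpoint Rsum (n : nat) (f : nat -> R) : R :=
  match n with O => 0 | S m => Rsum m f + f m end.

Lemma Re_Csum n f : Re (Csum n f) = Rsum n (fun k => Re (f k)).
Proof. induction n; simpl; auto. rewrite <- IHn. reflexivity. Qed.
Lemma Im_Csum n f : Im (Csum n f) = Rsum n (fun k => Im (f k)).
Proof. induction n; simpl; auto. rewrite <- IHn. reflexivity. Qed.

Lemma mvmul_mmul n A B v i : mvmul n (mmul n A B) v i = mvmul n A (mvmul n B v) i.
Proof.
  unfold mvmul, mmul.
  transitivity (Csum n (fun k => Csum n (fun j => Cmul (A i j) (Cmul (B j k) (v k))))).
  - apply Csum_ext; intros k _. rewrite <- Csum_scal_r. apply Csum_ext; intros; cring.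
  - rewrite Csum_exch. apply Csum_ext; intros j _. rewrite <- Csum_scal_l. auto.
Qed.

Lemma mvmul_vscale n A c v i : mvmul n A (vscale c v) i = Cmul c (mvmul n A v i).
Proof. unfold mvmul, vscale. rewrite <- Csum_scal_l. apply Csum_ext; intros; cring. Qed.

Lemma mvmul_ext n A v w i : vec_eq n v w -> mvmul n A v i = mvmul n A w i.
Proof. intros H. unfold mvmul. apply Csum_ext; intros. rewrite H; auto. Qed.

Lemma mvmul_ext_m n A B v i : (i < n)%nat -> mat_eq n A B -> mvmul n A v i = mvmul n B v i.
Proof. intros Hi H. unfold mvmul. apply Csum_ext; intros. rewrite H; auto. Qed.

Module Spec.
From mathcomp Require Import all_boot all_algebra Rstruct complex spectral.
Import GRing.Theory Num.Theory.
Local Open Scope ring_scope.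
Local Open Scope complex_scope.
Local Open Scope sesquilinear_scope.
Definition RR := Rdefinitions.R.

Lemma conjE (a b : RR) : ((Complex a b)^*)%R = Complex a (-b).
Proof.
rewrite [Complex a b]complexE /=.
rewrite rmorphD rmorphM /= conjCi.
have hr : forall x : RR, ((x%:C)^*)%R = x%:C.
  by move=> x; apply: conj_Creal; apply/complex_realP; exists x.
rewrite !hr.
by apply/eqP; rewrite eq_complex /=; simpc.
Qed.

Definition toC (z : Defs.C) : RR[i] := Complex (fst z) (snd z).
Definition ofC (w : RR[i]) : Defs.C := (complex.Re w, complex.Im w).

Lemma toC_ofC w : toC (ofC w) = w. Proof. by case: w. Qed.
Lemma toC_inj z w : toC z = toC w -> z = w.
Proof. by case: z => a b; case: w => c d [-> ->]. Qed.
Lemma toC_add z w : toC (Cadd z w) = toC z + toC w.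
Proof. by case: z => a b; case: w => c d. Qed.
Lemma toC_mul z w : toC (Cmul z w) = toC z * toC w.
Proof. by case: z => a b; case: w => c d. Qed.
Lemma toC_conj z : toC (Cconj z) = ((toC z)^*)%R.
Proof. by case: z => a b; rewrite /toC conjE. Qed.
Lemma toC_0 : toC C0 = 0. Proof. by []. Qed.
Lemma toC_1 : toC C1 = 1. Proof. by []. Qed.

Lemma toC_sum n f : toC (Csum n f) = \sum_(i < n) toC (f i).
Proof.
elim: n => [|n IH]; first by rewrite big_ord0.
by rewrite big_ord_recr /= toC_add IH.
Qed.

Lemma spec_mc n (H : Mat) : self_adjoint n H -> exists (V : nat -> Vec) (lam : nat -> Defs.C),
  (forall k, lt k n -> vec_eq n (mvmul n H (V k)) (vscale (lam k) (V k))) /\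
  (forall k l, lt k n -> lt l n -> inner n (V k) (V l) = if Nat.eqb k l then C1 else C0) /\
  (forall i j, lt i n -> lt j n ->
     Csum n (fun k => Cmul (V k i) (Cconj (V k j))) = if Nat.eqb i j then C1 else C0).
Proof.
case: n => [|m] hH.
  exists (fun _ _ => C0), (fun _ => C0).
  split; [|split]; intros; exfalso; lia.
pose A : 'M[RR[i]]_(m.+1) := \matrix_(i, j) toC (H j i).
have hA : A^t* = A.
  apply/matrixP => i j; rewrite !mxE -toC_conj.
  by congr toC; symmetry; apply: hH; apply/ltP.
have An : A \is normalmx by apply/normalmxP; rewrite hA.
have hD := @orthomx_spectralP _ _ A; rewrite An in hD.
move/elimT: hD => /(_ isT) hD.
set P := spectralmx A in hD; set d := spectral_diag A in hD.
have Pu : P \is unitarymx by exact: spectral_unitarymx.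
have Punit : P \in unitmx by exact: unitarymx_unit.
have PPt : P *m P^t* = 1%:M by apply/unitarymxP.
have PtP : P^t* *m P = 1%:M by rewrite -invmx_unitary // mulVmx.
have PA : P *m A = diag_mx d *m P.
  by rewrite {1}hD !mulmxA mulmxV // mul1mx.
exists (fun k i => ofC (P (inord k) (inord i))), (fun k => ofC (d 0 (inord k))).
split; [|split].
- move=> k /ltP hk i /ltP hi; apply: toC_inj.
  rewrite /mvmul /vscale toC_sum toC_mul !toC_ofC.
  have := PA; move/matrixP => /(_ (inord k) (inord i)).
  rewrite /= mul_diag_mx !mxE => <-.
  apply: eq_bigr => j _; rewrite toC_mul toC_ofC mxE mulrC inord_val.
  by rewrite inordK.
- move=> k l /ltP hk /ltP hl; apply: toC_inj.
  rewrite /inner toC_sum.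
  have := PPt; move/matrixP => /(_ (inord l) (inord k)).
  rewrite /= !mxE => E.
  transitivity (\sum_(j < m.+1) P (inord l) j * ((P^t*) j (inord k))).
    apply: eq_bigr => j _; rewrite toC_mul toC_conj !toC_ofC !mxE inord_val mulrC.
    by [].
  rewrite E.
  have -> : ((inord l : 'I_m.+1) == inord k) = Nat.eqb k l.
    apply/idP/idP.
    - move/eqP/(congr1 val); rewrite /= !inordK // => ->; exact/Nat.eqb_refl.
    - by move/Nat.eqb_spec => ->.
  by case: (Nat.eqb k l).
- move=> i j /ltP hi /ltP hj; apply: toC_inj.
  rewrite toC_sum.
  have := PtP; move/matrixP => /(_ (inord j) (inord i)).
  rewrite /= !mxE => E.
  transitivity (\sum_(k < m.+1) (P^t*) (inord j) k * P k (inord i)).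
    apply: eq_bigr => k _; rewrite toC_mul toC_conj !toC_ofC !mxE inord_val.
    by rewrite mulrC.
  rewrite E.
  have -> : ((inord j : 'I_m.+1) == inord i) = Nat.eqb i j.
    apply/idP/idP.
    - move/eqP/(congr1 val); rewrite /= !inordK // => ->; exact/Nat.eqb_refl.
    - by move/Nat.eqb_spec => ->.
  by case: (Nat.eqb i j).
Qed.
End Spec.

Lemma spectral_decomp n (H : Mat) : self_adjoint n H -> exists (V : nat -> Vec) (lam : nat -> C),
  (forall k, (k < n)%nat -> vec_eq n (mvmul n H (V k)) (vscale (lam k) (V k))) /\
  (forall k l, (k < n)%nat -> (l < n)%nat -> inner n (V k) (V l) = if Nat.eqb k l then C1 else C0) /\
  (forall i j, (i < n)%nat -> (j < n)%nat ->
     Csum n (fun k => Cmul (V k i) (Cconj (V k j))) = if Nat.eqb i j then C1 else C0).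
Proof. exact (@Spec.spec_mc n H). Qed.

Definition Dom (s t : R) : R -> Prop := fun u => 0 <= u <= s /\ u <> t.
Definition Clim s (f : R -> C) t (L : C) :=
  limit1_in (fun u => Re (f u)) (Dom s t) (Re L) t /\
  limit1_in (fun u => Im (f u)) (Dom s t) (Im L) t.
Definition CD s (f f' : R -> C) t :=
  Clim s (fun u => Cmul (RtoC (/ (u - t))) (Csub (f u) (f t))) t (f' t).

Lemma limit1_in_ext (f g : R -> R) D l x :
  (forall u, D u -> f u = g u) -> limit1_in f D l x -> limit1_in g D l x.
Proof.
  intros He H eps Heps. destruct (H eps Heps) as [a [Ha H1]]. exists a; split; auto.
  intros u [Du Hu]. rewrite <- He by auto. apply H1; auto.
Qed.

Lemma limit1_in_ext_l (f : R -> R) D l l' x : l = l' -> limit1_in f D l x -> limit1_in f D l' x.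
Proof. intros ->; auto. Qed.

Lemma Clim_ext s f g t L : (forall u, Dom s t u -> f u = g u) -> Clim s f t L -> Clim s g t L.
Proof.
  intros He [H1 H2]; split; eapply limit1_in_ext; eauto; intros; simpl; rewrite He; auto.
Qed.

Lemma Clim_ext_l s f t L L' : L = L' -> Clim s f t L -> Clim s f t L'.
Proof. intros ->; auto. Qed.

Lemma Clim_const s c t : Clim s (fun _ => c) t c.
Proof.
  split; intros eps Heps; exists 1; split; try lra; intros; simpl; unfold R_dist, Rdist;
  rewrite Rminus_diag_eq, Rabs_R0; auto.
Qed.

Lemma Clim_add s f g t a b : Clim s f t a -> Clim s g t b ->
  Clim s (fun u => Cadd (f u) (g u)) t (Cadd a b).
Proof. intros [H1 H2] [H3 H4]; split; apply limit_plus; auto. Qed.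

Lemma Clim_sub s f g t a b : Clim s f t a -> Clim s g t b ->
  Clim s (fun u => Csub (f u) (g u)) t (Csub a b).
Proof. intros [H1 H2] [H3 H4]; split; apply limit_minus; auto. Qed.

Lemma Clim_mul s f g t a b : Clim s f t a -> Clim s g t b ->
  Clim s (fun u => Cmul (f u) (g u)) t (Cmul a b).
Proof.
  intros [H1 H2] [H3 H4]; split.
  - apply limit_minus; apply limit_mul; auto.
  - apply limit_plus; apply limit_mul; auto.
Qed.

Lemma Clim_conj s f t a : Clim s f t a -> Clim s (fun u => Cconj (f u)) t (Cconj a).
Proof. intros [H1 H2]; split; auto. apply limit_Ropp; auto. Qed.

Lemma Clim_Csum s n (f : nat -> R -> C) (a : nat -> C) t :
  (forall k, (k < n)%nat -> Clim s (f k) t (a k)) ->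
  Clim s (fun u => Csum n (fun k => f k u)) t (Csum n a).
Proof.
  induction n; intros H; simpl.
  - apply Clim_const.
  - apply Clim_add. apply IHn; intros; apply H; lia. apply H; lia.
Qed.

Lemma limit_id_sub s t : limit1_in (fun u => u - t) (Dom s t) 0 t.
Proof.
  intros eps Heps. exists eps; split; auto. intros u [_ Hu]. simpl in *.
  unfold R_dist, Rdist in *. replace (u - t - 0) with (u - t) by ring. auto.
Qed.

Lemma limit_cst (c : R) D x : limit1_in (fun _ => c) D c x.
Proof.
  intros eps Heps; exists 1; split; try lra; intros; simpl; unfold R_dist, Rdist;
  rewrite Rminus_diag_eq, Rabs_R0; auto.
Qed.

Lemma CD_cont s f f' t : CD s f f' t -> Clim s f t (f t).
Proof.
  intros [H1 H2].
  assert (Hid := limit_id_sub s t).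
  split.
  - assert (L := limit_plus _ _ _ _ _ _ (limit_cst (Re (f t)) (Dom s t) t) (limit_mul _ _ _ _ _ _ Hid H1)).
    eapply limit1_in_ext_l; [| eapply limit1_in_ext; [| apply L]].
    + simpl; ring.
    + intros u [_ Hu]. simpl. cunf. field. intro; apply Hu; lra.
  - assert (L := limit_plus _ _ _ _ _ _ (limit_cst (Im (f t)) (Dom s t) t) (limit_mul _ _ _ _ _ _ Hid H2)).
    eapply limit1_in_ext_l; [| eapply limit1_in_ext; [| apply L]].
    + simpl; ring.
    + intros u [_ Hu]. simpl. cunf. field. intro; apply Hu; lra.
Qed.

Lemma CD_const s c t : CD s (fun _ => c) (fun _ => C0) t.
Proof.
  eapply Clim_ext; [| apply Clim_const].
  intros u _; cring.
Qed.

Lemma CD_add s f f' g g' t : CD s f f' t -> CD s g g' t ->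
  CD s (fun u => Cadd (f u) (g u)) (fun u => Cadd (f' u) (g' u)) t.
Proof.
  intros H1 H2. eapply Clim_ext; [| apply Clim_add; [apply H1 | apply H2]].
  intros u _; cring.
Qed.

Lemma CD_sub s f f' g g' t : CD s f f' t -> CD s g g' t ->
  CD s (fun u => Csub (f u) (g u)) (fun u => Csub (f' u) (g' u)) t.
Proof.
  intros H1 H2. eapply Clim_ext; [| apply Clim_sub; [apply H1 | apply H2]].
  intros u _; cring.
Qed.

Lemma CD_mul s f f' g g' t : CD s f f' t -> CD s g g' t ->
  CD s (fun u => Cmul (f u) (g u)) (fun u => Cadd (Cmul (f' u) (g u)) (Cmul (f u) (g' u))) t.
Proof.
  intros H1 H2. assert (Hg := CD_cont _ _ _ _ H2).
  eapply Clim_ext; [| apply Clim_add; [apply (Clim_mul _ _ _ _ _ _ H1 Hg) | apply (Clim_mul _ _ _ _ _ _ (Clim_const s (f t) t) H2)]].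
  intros u _; cring.
Qed.

Lemma CD_conj s f f' t : CD s f f' t -> CD s (fun u => Cconj (f u)) (fun u => Cconj (f' u)) t.
Proof.
  intros H. eapply Clim_ext; [| apply (Clim_conj _ _ _ _ H)]. intros u _; cring.
Qed.

Lemma CD_Csum s n (f f' : nat -> R -> C) t :
  (forall k, (k < n)%nat -> CD s (f k) (f' k) t) ->
  CD s (fun u => Csum n (fun k => f k u)) (fun u => Csum n (fun k => f' k u)) t.
Proof.
  induction n; intros H; simpl.
  - apply CD_const.
  - apply CD_add. apply IHn; intros; apply H; lia. apply H; lia.
Qed.

Lemma CD_ext s f g f' t : 0 <= t <= s -> (forall u, 0 <= u <= s -> f u = g u) ->
  CD s f f' t -> CD s g f' t.
Proof.
  intros Ht He H. eapply Clim_ext; [| apply H]. intros u [Hu _]. rewrite !He; auto.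
Qed.

Lemma CD_ext_d s f f' g' t : f' t = g' t -> CD s f f' t -> CD s f g' t.
Proof. intros E H. unfold CD. rewrite <- E. auto. Qed.

Lemma deriv_to_lim a b f f' t : has_deriv_on a b f f' -> a <= t <= b ->
  limit1_in (fun u => (f u - f t) / (u - t)) (fun u => a <= u <= b /\ u <> t) (f' t) t.
Proof.
  intros H Ht eps Heps. destruct (H t Ht eps Heps) as [d [Hd H1]].
  exists d; split; auto. intros u [[Hu Hut] Hdist]. apply H1; auto.
Qed.

Lemma C_deriv_CD s f f' t : C_has_deriv_on 0 s f f' -> 0 <= t <= s -> CD s f f' t.
Proof.
  intros [H1 H2] Ht. split.
  - eapply limit1_in_ext; [| apply (deriv_to_lim _ _ _ _ _ H1 Ht)].
    intros u _. cunf. unfold Rdiv. ring.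
  - eapply limit1_in_ext; [| apply (deriv_to_lim _ _ _ _ _ H2 Ht)].
    intros u _. cunf. unfold Rdiv. ring.
Qed.

Lemma Dom_adh s t : 0 < s -> 0 <= t <= s -> adhDa (Dom s t) t.
Proof.
  intros Hs Ht alp Halp. unfold Dom, Rdist.
  destruct (Rle_dec t (s/2)).
  - exists (t + Rmin (alp/2) (s/2)). split.
    + split. split. assert (0 < Rmin (alp/2) (s/2)) by (apply Rmin_glb_lt; lra). lra.
      assert (Rmin (alp/2) (s/2) <= s/2) by apply Rmin_r. lra.
      assert (0 < Rmin (alp/2) (s/2)) by (apply Rmin_glb_lt; lra). lra.
    + assert (0 < Rmin (alp/2) (s/2)) by (apply Rmin_glb_lt; lra).
      assert (Rmin (alp/2) (s/2) <= alp/2) by apply Rmin_l.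
      rewrite Rabs_right; lra.
  - exists (t - Rmin (alp/2) (s/2)). split.
    + split. split. assert (Rmin (alp/2) (s/2) <= s/2) by apply Rmin_r. lra.
      assert (0 < Rmin (alp/2) (s/2)) by (apply Rmin_glb_lt; lra). lra.
      assert (0 < Rmin (alp/2) (s/2)) by (apply Rmin_glb_lt; lra). lra.
    + assert (0 < Rmin (alp/2) (s/2)) by (apply Rmin_glb_lt; lra).
      assert (Rmin (alp/2) (s/2) <= alp/2) by apply Rmin_l.
      rewrite Rabs_left; lra.
Qed.

Lemma Clim_unique s f t a b : 0 < s -> 0 <= t <= s -> Clim s f t a -> Clim s f t b -> a = b.
Proof.
  intros Hs Ht [H1 H2] [H3 H4]. apply Cext.
  eapply single_limit; [apply Dom_adh; eauto | eauto | eauto].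
  eapply single_limit; [apply Dom_adh; eauto | eauto | eauto].
Qed.

Definition cexp (x : R) : C := (cos x, sin x).
Fixpoint cpow (z : C) (m : nat) : C := match m with O => C1 | S k => Cmul (cpow z k) z end.
Definition eterm (z : C) (k : nat) : C := Cmul (RtoC (/ INR (fact k))) (cpow z k).
Definition esum (z : C) (N : nat) : C := Csum (S N) (eterm z).

Lemma pow_sq x k : (x * x) ^ k = x ^ (2 * k).
Proof.
  induction k. simpl; auto.
  replace (2 * S k)%nat with (2 * k + 2)%nat by lia. rewrite pow_add, <- IHk. simpl. ring.
Qed.

Lemma cpow_S z m : cpow z (S m) = Cmul (cpow z m) z. Proof. reflexivity. Qed.
Lemma powS' x n : x ^ (S n) = x * x ^ n. Proof. reflexivity. Qed.

Lemma cpow_eo x m : cpow (0, x) (2 * m) = ((-1) ^ m * x ^ (2 * m), 0) /\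
                    cpow (0, x) (2 * m + 1) = (0, (-1) ^ m * x ^ (2 * m + 1)).
Proof.
  induction m.
  - simpl. split; cring.
  - destruct IHm as [H1 H2].
    replace (2 * S m + 1)%nat with (S (S (2 * m + 1))) by lia.
    replace (2 * S m)%nat with (S (2 * m + 1)) by lia.
    rewrite !cpow_S, H2. rewrite !powS'. split; cring.
Qed.

Definition cosS x M := sum_f_R0 (fun i => cos_n i * (x * x) ^ i) M.
Definition sinS x M := sum_f_R0 (fun i => sin_n i * (x * x) ^ i) M.

Lemma esum_S z N : esum z (S N) = Cadd (esum z N) (eterm z (S N)).
Proof. reflexivity. Qed.

Lemma esum_re x M : Re (esum (0, x) (2 * M)) = cosS x M /\ Re (esum (0, x) (2 * M + 1)) = cosS x M.
Proof.
  induction M.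
  - unfold esum, eterm, cosS, cos_n. simpl. cunf. split; field.
  - destruct IHM as [H1 H2].
    assert (E1 : (2 * S M = S (2 * M + 1))%nat) by lia.
    assert (E2 : (2 * S M + 1 = S (S (2 * M + 1)))%nat) by lia.
    assert (A : Re (esum (0, x) (2 * S M)) = cosS x (S M)).
    { rewrite E1, esum_S. unfold Cadd at 1. rewrite Re_mk, H2.
      unfold cosS. simpl sum_f_R0. fold (cosS x M). f_equal.
      unfold eterm. rewrite <- E1. destruct (cpow_eo x (S M)) as [C1' _]. rewrite C1'.
      unfold cos_n. rewrite <- pow_sq. cunf. simpl pow. field. apply not_0_INR. apply fact_neq_0. }
    split; auto.
    rewrite E2, esum_S. rewrite <- E2. unfold Cadd at 1. rewrite Re_mk.
    rewrite <- E1, A. unfold eterm. destruct (cpow_eo x (S M)) as [_ C2']. rewrite C2'.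
    cunf. ring.
Qed.

Lemma esum_im x M : Im (esum (0, x) (2 * M + 1)) = x * sinS x M /\ Im (esum (0, x) (2 * M + 2)) = x * sinS x M.
Proof.
  induction M.
  - unfold esum, eterm, sinS, sin_n. simpl. cunf. split; field.
  - destruct IHM as [H1 H2].
    assert (E1 : (2 * S M + 1 = S (2 * M + 2))%nat) by lia.
    assert (E2 : (2 * S M + 2 = S (S (2 * M + 2)))%nat) by lia.
    assert (A : Im (esum (0, x) (2 * S M + 1)) = x * sinS x (S M)).
    { rewrite E1, esum_S. unfold Cadd at 1. rewrite Im_mk, H2.
      unfold sinS. simpl sum_f_R0. fold (sinS x M).
      unfold eterm. rewrite <- E1. destruct (cpow_eo x (S M)) as [_ C2']. rewrite C2'.
      unfold sin_n. replace (2 * S M + 1)%nat with (S (2 * S M)) by lia.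
      replace (x ^ S (2 * S M)) with (x * (x * x * (x * x) ^ M)) by (rewrite pow_sq; replace (2 * S M)%nat with (2 * M + 2)%nat by lia; rewrite powS', pow_add; simpl; ring).
      cunf. field. apply not_0_INR. apply fact_neq_0. }
    split; auto.
    rewrite E2, esum_S. rewrite <- E2. unfold Cadd at 1. rewrite Im_mk.
    replace (S (2 * M + 2)) with (2 * S M + 1)%nat by lia. rewrite A.
    replace (S (S (2 * M + 2))) with (2 * (S (S M)))%nat by lia.
    replace (2 * S M + 2)%nat with (2 * S (S M))%nat by lia.
    unfold eterm. destruct (cpow_eo x (S (S M))) as [C1' _]. rewrite C1'.
    cunf. ring.
Qed.

Lemma cv_interleave (u c : nat -> R) L :
  (forall M, u (2 * M)%nat = c M /\ u (2 * M + 1)%nat = c M) -> Un_cv c L -> Un_cv u L.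
Proof.
  intros H Hc eps Heps. destruct (Hc eps Heps) as [N0 HN].
  exists (2 * N0)%nat. intros n Hn.
  destruct (Nat.Even_or_Odd n) as [[m Hm] | [m Hm]]; subst n.
  - rewrite (proj1 (H m)). apply HN. lia.
  - rewrite (proj2 (H m)). apply HN. lia.
Qed.

Lemma cv_shift (u : nat -> R) L : Un_cv (fun n => u (S n)) L -> Un_cv u L.
Proof.
  intros H eps Heps. destruct (H eps Heps) as [N0 HN]. exists (S N0). intros n Hn.
  destruct n. lia. apply HN. lia.
Qed.

Lemma cv_const (c : R) : Un_cv (fun _ => c) c.
Proof. intros eps Heps. exists O. intros. unfold Rdist. rewrite Rminus_diag_eq, Rabs_R0; auto. Qed.

Lemma esum_cv_re x : Un_cv (fun N => Re (esum (0, x) N)) (cos x).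
Proof.
  apply cv_interleave with (c := cosS x). apply esum_re.
  unfold cos. destruct (exist_cos (Rsqr x)) as [l Hl]. exact Hl.
Qed.

Lemma esum_cv_im x : Un_cv (fun N => Im (esum (0, x) N)) (sin x).
Proof.
  apply cv_shift. apply cv_interleave with (c := fun M => x * sinS x M).
  - intros M. split.
    + replace (S (2 * M)) with (2 * M + 1)%nat by lia. apply esum_im.
    + replace (S (2 * M + 1)) with (2 * M + 2)%nat by lia. apply esum_im.
  - unfold sin. destruct (exist_sin (Rsqr x)) as [l Hl].
    apply (CV_mult (fun _ => x) (sinS x) x l). apply cv_const. exact Hl.
Qed.

Definition Ccv (a : nat -> C) (L : C) :=
  Un_cv (fun N => Re (a N)) (Re L) /\ Un_cv (fun N => Im (a N)) (Im L).

Lemma Un_cv_ext (u v : nat -> R) L : (forall N, u N = v N) -> Un_cv u L -> Un_cv v L.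
Proof. intros E H eps He. destruct (H eps He) as [N HN]. exists N. intros. rewrite <- E. auto. Qed.

Lemma Ccv_ext a b L : (forall N, a N = b N) -> Ccv a L -> Ccv b L.
Proof. intros E [H1 H2]. split; eapply Un_cv_ext; eauto; intros; simpl; rewrite E; auto. Qed.

Lemma Ccv_const c : Ccv (fun _ => c) c.
Proof. split; apply cv_const. Qed.

Lemma Ccv_add a b A B : Ccv a A -> Ccv b B -> Ccv (fun N => Cadd (a N) (b N)) (Cadd A B).
Proof. intros [H1 H2] [H3 H4]; split; apply CV_plus; auto. Qed.

Lemma Ccv_mul a b A B : Ccv a A -> Ccv b B -> Ccv (fun N => Cmul (a N) (b N)) (Cmul A B).
Proof.
  intros [H1 H2] [H3 H4]; split.
  - apply CV_minus; apply CV_mult; auto.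
  - apply CV_plus; apply CV_mult; auto.
Qed.

Lemma Ccv_Csum n (a : nat -> nat -> C) (A : nat -> C) :
  (forall k, (k < n)%nat -> Ccv (fun N => a N k) (A k)) ->
  Ccv (fun N => Csum n (a N)) (Csum n A).
Proof.
  induction n; intros H; simpl.
  - apply Ccv_const.
  - apply Ccv_add. apply IHn; intros; apply H; lia. apply H; lia.
Qed.

Lemma Ccv_unique a A B : Ccv a A -> Ccv a B -> A = B.
Proof.
  intros [H1 H2] [H3 H4]. apply Cext; eapply UL_sequence; eauto.
Qed.

Lemma esum_cv x : Ccv (esum (0, x)) (cexp x).
Proof. split. apply esum_cv_re. apply esum_cv_im. Qed.

Lemma mvmul_mid n v i : (i < n)%nat -> mvmul n mid v i = v i.
Proof.
  intros Hi. unfold mvmul, mid. rewrite <- (Csum_delta' n i v Hi).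
  apply Csum_ext; intros k _. destruct (Nat.eqb i k); cring.
Qed.

Lemma mpow_eig n A v mu :
  (forall i, (i < n)%nat -> mvmul n A v i = Cmul mu (v i)) ->
  forall m i, (i < n)%nat -> mvmul n (mpow n A m) v i = Cmul (cpow mu m) (v i).
Proof.
  intros HA m. induction m; intros i Hi.
  - simpl. rewrite mvmul_mid by auto. cring.
  - simpl. rewrite mvmul_mmul.
    rewrite (mvmul_ext n (mpow n A m) (mvmul n A v) (vscale mu v)).
    + rewrite mvmul_vscale, IHm by auto. cring.
    + intros j Hj. rewrite HA by auto. reflexivity.
Qed.

Lemma exp_eig n H E t v l :
  is_mexp n (mscale (0, t) H) E ->
  (forall i, (i < n)%nat -> mvmul n H v i = Cmul (RtoC l) (v i)) ->
  forall i, (i < n)%nat -> mvmul n E v i = Cmul (cexp (t * l)) (v i).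
Proof.
  intros HE Hv i Hi.
  set (A := mscale (0, t) H).
  assert (HA : forall i, (i < n)%nat -> mvmul n A v i = Cmul (0, t * l) (v i)).
  { intros i' Hi'. unfold A, mvmul, mscale.
    transitivity (Cmul (0, t) (mvmul n H v i')).
    - unfold mvmul. rewrite <- Csum_scal_l. apply Csum_ext; intros; cring.
    - rewrite Hv by auto. cring. }
  assert (C1 : Ccv (fun N => Csum n (fun j => Cmul (Csum (S N) (fun k => Cmul (RtoC (/ INR (fact k))) (mpow n A k i j))) (v j))) (mvmul n E v i)).
  { unfold mvmul. apply Ccv_Csum. intros j Hj. apply Ccv_mul; [| apply Ccv_const].
    destruct (HE i j Hi Hj) as [H1 H2]. split; auto. }
  assert (C2 : Ccv (fun N => Csum n (fun j => Cmul (Csum (S N) (fun k => Cmul (RtoC (/ INR (fact k))) (mpow n A k i j))) (v j))) (Cmul (cexp (t * l)) (v i))).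
  { eapply Ccv_ext; [| apply Ccv_mul; [apply esum_cv | apply Ccv_const]].
    intros N. simpl. unfold esum.
    transitivity (Csum (S N) (fun k => Cmul (RtoC (/ INR (fact k))) (mvmul n (mpow n A k) v i))).
    - rewrite <- Csum_scal_r. apply Csum_ext; intros k _.
      rewrite (mpow_eig n A v (0, t * l) HA k i Hi). unfold eterm. cring.
    - unfold mvmul.
      transitivity (Csum (S N) (fun k => Csum n (fun j => Cmul (Cmul (RtoC (/ INR (fact k))) (mpow n A k i j)) (v j)))).
      + apply Csum_ext; intros k _. rewrite <- Csum_scal_l. apply Csum_ext; intros; cring.
      + rewrite Csum_exch. apply Csum_ext; intros j _. rewrite Csum_scal_r. reflexivity. }
  eapply Ccv_unique; eauto.
Qed.

Lemma RInt_is_iff f a b w : RInt_is f a b w <-> is_RInt f a b w.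
Proof.
  split.
  - intros [pr <-]. apply ex_RInt_Reals_aux_1.
  - intros H. assert (pr := ex_RInt_Reals_0 f a b (ex_intro _ w H)). exists pr.
    rewrite <- (RInt_Reals f a b pr). apply is_RInt_unique. auto.
Qed.

Lemma isRInt_uniq (f : R -> R) a b (w1 w2 : R) : @is_RInt R_NormedModule f a b w1 -> @is_RInt R_NormedModule f a b w2 -> w1 = w2.
Proof.
  intros H1 H2. apply RInt_is_iff in H1. apply RInt_is_iff in H2.
  destruct H1 as [p1 <-]. destruct H2 as [p2 <-]. apply RiemannInt_P5.
Qed.

Lemma small_zero x : (forall eps, 0 < eps -> Rabs x < eps) -> x = 0.
Proof.
  intros H. destruct (Req_dec x 0); auto. exfalso.
  assert (0 < Rabs x) by (apply Rabs_pos_lt; auto). specialize (H (Rabs x) H1). lra.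
Qed.

Lemma improper_plus f g v w : improper_int f v -> improper_int g w ->
  improper_int (fun t => f t + g t) (v + w).
Proof.
  intros Hf Hg eps Heps.
  destruct (Hf (eps/2) ltac:(lra)) as [T1 [HT1 H1]].
  destruct (Hg (eps/2) ltac:(lra)) as [T2 [HT2 H2]].
  exists (Rmax T1 T2). split. apply (Rlt_le_trans _ _ _ HT1 (Rmax_l _ _)).
  intros a b Ha Hb.
  destruct (H1 a b) as [w1 [I1 E1]]. assert (T1 <= Rmax T1 T2) by apply Rmax_l. lra. assert (T1 <= Rmax T1 T2) by apply Rmax_l. lra.
  destruct (H2 a b) as [w2 [I2 E2]]. assert (T2 <= Rmax T1 T2) by apply Rmax_r. lra. assert (T2 <= Rmax T1 T2) by apply Rmax_r. lra.
  exists (w1 + w2). split.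
  - apply RInt_is_iff. apply RInt_is_iff in I1. apply RInt_is_iff in I2.
    apply (is_RInt_plus _ _ _ _ _ _ I1 I2).
  - replace (w1 + w2 - (v + w)) with ((w1 - v) + (w2 - w)) by ring.
    eapply Rle_lt_trans. apply Rabs_triang. lra.
Qed.

Lemma improper_scal c f v : improper_int f v -> improper_int (fun t => c * f t) (c * v).
Proof.
  intros Hf eps Heps.
  destruct (Hf (eps / (Rabs c + 1))) as [T [HT H1]].
  { apply Rdiv_lt_0_compat; auto. assert (0 <= Rabs c) by apply Rabs_pos. lra. }
  exists T. split; auto. intros a b Ha Hb.
  destruct (H1 a b Ha Hb) as [w1 [I1 E1]].
  exists (c * w1). split.
  - apply RInt_is_iff. apply RInt_is_iff in I1. apply (is_RInt_scal _ _ _ c _ I1).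
  - replace (c * w1 - c * v) with (c * (w1 - v)) by ring. rewrite Rabs_mult.
    assert (0 <= Rabs c) by apply Rabs_pos.
    assert (Rabs c * Rabs (w1 - v) <= Rabs c * (eps / (Rabs c + 1))).
    { apply Rmult_le_compat_l; lra. }
    assert (Rabs c * (eps / (Rabs c + 1)) < eps).
    { unfold Rdiv. rewrite <- Rmult_assoc. apply (Rmult_lt_reg_r (Rabs c + 1)). lra.
      rewrite Rmult_assoc, Rinv_l by lra. nra. }
    lra.
Qed.

Lemma improper_ext f g v : (forall t, f t = g t) -> improper_int f v -> improper_int g v.
Proof.
  intros E Hf eps Heps. destruct (Hf eps Heps) as [T [HT H1]]. exists T; split; auto.
  intros a b Ha Hb. destruct (H1 a b Ha Hb) as [w [I1 E1]]. exists w; split; auto.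
  apply RInt_is_iff. apply RInt_is_iff in I1. eapply is_RInt_ext; [|apply I1]. intros; auto.
Qed.

Lemma improper_ext_v f v w : v = w -> improper_int f v -> improper_int f w.
Proof. intros ->; auto. Qed.



Lemma improper_zero : improper_int (fun _ => 0) 0.
Proof.
  intros eps Heps. exists 1. split. lra. intros a b Ha Hb. exists 0. split.
  - apply RInt_is_iff. assert (H := is_RInt_const a b 0).
    change (is_RInt (fun _ => 0) a b ((b - a) * 0)) in H. rewrite Rmult_0_r in H. exact H.
  - rewrite Rminus_0_r, Rabs_R0; auto.
Qed.

Lemma improper_Rsum n (f : nat -> R -> R) (v : nat -> R) :
  (forall k, (k < n)%nat -> improper_int (f k) (v k)) ->
  improper_int (fun t => Rsum n (fun k => f k t)) (Rsum n v).
Proof.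
  induction n; intros H; simpl.
  - apply improper_zero.
  - apply improper_plus. apply IHn; intros; apply H; lia. apply H; lia.
Qed.

Lemma improper_unique f v w : improper_int f v -> improper_int f w -> v = w.
Proof.
  intros Hv Hw. apply Rminus_diag_uniq. apply small_zero. intros eps Heps.
  destruct (Hv (eps/2) ltac:(lra)) as [T1 [HT1 H1]].
  destruct (Hw (eps/2) ltac:(lra)) as [T2 [HT2 H2]].
  set (T := Rmax T1 T2).
  assert (T1 <= T) by apply Rmax_l. assert (T2 <= T) by apply Rmax_r.
  destruct (H1 (-T) T) as [w1 [I1 E1]]; try lra.
  destruct (H2 (-T) T) as [w2 [I2 E2]]; try lra.
  apply RInt_is_iff in I1. apply RInt_is_iff in I2.
  assert (w1 = w2) by (apply (isRInt_uniq f (-T) T); auto).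
  subst. replace (v - w) with (-(w2 - v) + (w2 - w)) by ring.
  eapply Rle_lt_trans. apply Rabs_triang. rewrite Rabs_Ropp. lra.
Qed.

Lemma odd_RInt f T w : 0 < T -> (forall t, t <> 0 -> f (- t) = - f t) -> is_RInt f (- T) T w -> w = 0.
Proof.
  intros HT Hodd H.
  assert (E1 : ex_RInt f (-T) 0). { apply (ex_RInt_Chasles_1 f (-T) 0 T). lra. exists w; auto. }
  assert (E2 : ex_RInt f 0 T). { apply (ex_RInt_Chasles_2 f (-T) 0 T). lra. exists w; auto. }
  destruct E1 as [l1 I1]. destruct E2 as [l2 I2].
  assert (Hw : w = l1 + l2).
  { assert (I := is_RInt_Chasles f _ _ _ _ _ I1 I2).
    apply (isRInt_uniq f (-T) T); auto. }
  assert (I3 : is_RInt f 0 (- T) (opp l1)) by (apply is_RInt_swap; auto).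
  assert (I3' : is_RInt f (-0) (-T) (opp l1)) by (rewrite Ropp_0; auto).
  assert (I4 := is_RInt_comp_opp f 0 T _ I3').
  assert (I5 : is_RInt f 0 T (opp l1)).
  { eapply is_RInt_ext; [| apply I4]. intros x Hx.
    rewrite Rmin_left in Hx by lra. rewrite Rmax_right in Hx by lra.
    assert (E := Hodd x ltac:(lra)). change (- (f (- x)) = f x). rewrite E. ring. }
  assert (l2 = opp l1) by (apply (isRInt_uniq f 0 T); auto).
  rewrite Hw, H0. unfold opp; simpl. ring.
Qed.

Lemma odd_improper f v : (forall t, t <> 0 -> f (- t) = - f t) -> improper_int f v -> v = 0.
Proof.
  intros Hodd Hf. apply small_zero. intros eps Heps.
  destruct (Hf eps Heps) as [T [HT H1]].
  destruct (H1 (-T) T) as [w [I E]]; try lra.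
  apply RInt_is_iff in I. apply odd_RInt in I; auto. subst.
  replace v with (- (0 - v)) by ring. rewrite Rabs_Ropp. auto.
Qed.

Lemma inner_scal_r n u c v : inner n u (vscale c v) = Cmul c (inner n u v).
Proof. unfold inner, vscale. rewrite <- Csum_scal_l. apply Csum_ext; intros; cring. Qed.
Lemma inner_scal_l n u c v : inner n (vscale c u) v = Cmul (Cconj c) (inner n u v).
Proof. unfold inner, vscale. rewrite <- Csum_scal_l. apply Csum_ext; intros; cring. Qed.
Lemma inner_ext n u u' v v' : vec_eq n u u' -> vec_eq n v v' -> inner n u v = inner n u' v'.
Proof. intros H1 H2. unfold inner. apply Csum_ext; intros. rewrite H1, H2; auto. Qed.
Lemma inner_conj n u v : Cconj (inner n u v) = inner n v u.
Proof. unfold inner. rewrite <- Csum_conj. apply Csum_ext; intros; cring. Qed.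

Lemma herm_inner n H u v : self_adjoint n H ->
  inner n u (mvmul n H v) = inner n (mvmul n H u) v.
Proof.
  intros Hs. unfold inner, mvmul.
  transitivity (Csum n (fun i => Csum n (fun j => Cmul (Cmul (Cconj (u i)) (H i j)) (v j)))).
  - apply Csum_ext; intros i _. rewrite <- Csum_scal_l. apply Csum_ext; intros; cring.
  - rewrite Csum_exch. apply Csum_ext; intros j Hj. rewrite Csum_scal_r. f_equal.
    rewrite <- Csum_conj. apply Csum_ext; intros i Hi. rewrite (Hs i j) by auto. cring.
Qed.

Lemma Cmul_cancel_real (l : R) w : Cmul (RtoC l) w = C0 -> w <> C0 -> l = 0.
Proof.
  intros H Hw. destruct w as [a b]. unfold Cmul, RtoC, C0, Re, Im in H; simpl in H.
  injection H; intros H1 H2.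
  destruct (Req_dec l 0); auto. exfalso. apply Hw. unfold C0.
  f_equal; apply (Rmult_eq_reg_l l); try lra; auto.
Qed.

Lemma expand n (V : nat -> Vec) u m :
  (forall i j, (i < n)%nat -> (j < n)%nat ->
     Csum n (fun k => Cmul (V k i) (Cconj (V k j))) = if Nat.eqb i j then C1 else C0) ->
  (m < n)%nat -> u m = Csum n (fun k => Cmul (inner n (V k) u) (V k m)).
Proof.
  intros Hc Hm. unfold inner.
  transitivity (Csum n (fun j => Cmul (u j) (Csum n (fun k => Cmul (V k m) (Cconj (V k j)))))).
  - rewrite <- (Csum_delta' n m u Hm). apply Csum_ext; intros j Hj. rewrite Hc by auto.
    destruct (Nat.eqb m j); cring.
  - transitivity (Csum n (fun j => Csum n (fun k => Cmul (Cmul (Cconj (V k j)) (u j)) (V k m)))).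
    + apply Csum_ext; intros j _. rewrite <- Csum_scal_l. apply Csum_ext; intros; cring.
    + rewrite Csum_exch. apply Csum_ext; intros k _. rewrite Csum_scal_r. reflexivity.
Qed.

Lemma mvmul_comb n A (c : nat -> C) (Vs : nat -> Vec) i :
  mvmul n A (fun m => Csum n (fun k => Cmul (c k) (Vs k m))) i =
  Csum n (fun k => Cmul (c k) (mvmul n A (Vs k) i)).
Proof.
  unfold mvmul.
  transitivity (Csum n (fun m => Csum n (fun k => Cmul (c k) (Cmul (A i m) (Vs k m))))).
  - apply Csum_ext; intros. rewrite <- Csum_scal_l. apply Csum_ext; intros; cring.
  - rewrite Csum_exch. apply Csum_ext; intros. rewrite Csum_scal_l. auto.
Qed.

Lemma cexp_add x y : Cmul (cexp x) (cexp y) = cexp (x + y).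
Proof. unfold cexp. rewrite cos_plus, sin_plus. cring. Qed.
Lemma cexp_opp x : cexp (- x) = Cconj (cexp x).
Proof. unfold cexp. rewrite cos_neg, sin_neg. cring. Qed.
Lemma cexp_0 : cexp 0 = C1.
Proof. unfold cexp. rewrite cos_0, sin_0. reflexivity. Qed.

Definition Cimp (W : R -> R) (g : R -> C) (v : C) :=
  improper_int (fun t => W t * Re (g t)) (Re v) /\ improper_int (fun t => W t * Im (g t)) (Im v).

Lemma Cimp_ext W g h v : (forall t, g t = h t) -> Cimp W g v -> Cimp W h v.
Proof. intros E [H1 H2]; split; eapply improper_ext; try eassumption; intros; simpl; rewrite E; auto. Qed.

Lemma Cimp_ext_v W g v w : v = w -> Cimp W g v -> Cimp W g w.
Proof. intros ->; auto. Qed.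

Lemma Cimp_add W g h v w : Cimp W g v -> Cimp W h w -> Cimp W (fun t => Cadd (g t) (h t)) (Cadd v w).
Proof.
  intros [H1 H2] [H3 H4]; split.
  - eapply improper_ext; [| apply (improper_plus _ _ _ _ H1 H3)]. intros; cunf; ring.
  - eapply improper_ext; [| apply (improper_plus _ _ _ _ H2 H4)]. intros; cunf; ring.
Qed.

Lemma Cimp_scal W c g v : Cimp W g v -> Cimp W (fun t => Cmul c (g t)) (Cmul c v).
Proof.
  intros [H1 H2]; split.
  - eapply improper_ext; [| eapply improper_ext_v; [| apply (improper_plus _ _ _ _ (improper_scal (Re c) _ _ H1) (improper_scal (- Im c) _ _ H2))]].
    intros; cunf; ring. cunf; ring.
  - eapply improper_ext; [| eapply improper_ext_v; [| apply (improper_plus _ _ _ _ (improper_scal (Re c) _ _ H2) (improper_scal (Im c) _ _ H1))]].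
    intros; cunf; ring. cunf; ring.
Qed.

Lemma Cimp_zero W : Cimp W (fun _ => C0) C0.
Proof.
  split; eapply improper_ext; try apply improper_zero; intros; cunf; ring.
Qed.

Lemma Cimp_Csum W n (g : nat -> R -> C) (v : nat -> C) :
  (forall k, (k < n)%nat -> Cimp W (g k) (v k)) ->
  Cimp W (fun t => Csum n (fun k => g k t)) (Csum n v).
Proof.
  induction n; intros H; simpl.
  - apply Cimp_zero.
  - apply Cimp_add. apply IHn; intros; apply H; lia. apply H; lia.
Qed.

Lemma Cimp_unique W g v w : Cimp W g v -> Cimp W g w -> v = w.
Proof. intros [H1 H2] [H3 H4]. apply Cext; eapply improper_unique; eauto. Qed.

Lemma Cimp_sub W g h v w : Cimp W g v -> Cimp W h w -> Cimp W (fun t => Csub (g t) (h t)) (Csub v w).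
Proof.
  intros Hg Hh. assert (H := Cimp_add _ _ _ _ _ Hg (Cimp_scal W (-1, 0) _ _ Hh)).
  eapply Cimp_ext; [| eapply Cimp_ext_v; [| apply H]]. intros; cring. cring.
Qed.

Lemma Cimp_const_zero W g v : (forall t, t <> 0 -> W (- t) = - W t) ->
  Cimp W (fun _ => g) v -> v = C0.
Proof.
  intros Hodd [H1 H2]. apply Cext; unfold C0, Re, Im; simpl.
  - apply (odd_improper (fun t => W t * Re g)); auto. intros t Ht. rewrite Hodd by auto; ring.
  - apply (odd_improper (fun t => W t * Im g)); auto. intros t Ht. rewrite Hodd by auto; ring.
Qed.

Lemma Cimp_fourier W Delta b mu : is_filter_function Delta W -> 0 < Delta -> Delta <= mu ->
  Cimp W (fun t => Cmul b (cexp (t * mu))) (Cmul b (0, / mu)).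
Proof.
  intros HW HD Hmu.
  destruct HW as [_ [_ [_ [_ [_ [_ [_ HF]]]]]]].
  destruct (HF mu) as [Hc Hs]. rewrite Rabs_right; lra.
  split.
  - eapply improper_ext; [| eapply improper_ext_v; [| apply (improper_plus _ _ _ _ (improper_scal (Re b) _ _ Hc) (improper_scal (- Im b) _ _ Hs))]].
    + intros t. unfold cexp. rewrite (Rmult_comm t mu). cunf. ring.
    + cunf. ring.
  - eapply improper_ext; [| eapply improper_ext_v; [| apply (improper_plus _ _ _ _ (improper_scal (Re b) _ _ Hs) (improper_scal (Im b) _ _ Hc))]].
    + intros t. unfold cexp. rewrite (Rmult_comm t mu). cunf. ring.
    + cunf. ring.
Qed.

Definition clamp (s x : R) := Rmax 0 (Rmin s x).

Lemma clamp_in s x : 0 <= s -> 0 <= clamp s x <= s.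
Proof. intros. unfold clamp, Rmax, Rmin. repeat destruct Rle_dec; lra. Qed.
Lemma clamp_id s x : 0 <= x <= s -> clamp s x = x.
Proof. intros. unfold clamp, Rmax, Rmin. repeat destruct Rle_dec; lra. Qed.
Lemma clamp_lip s x y : 0 <= x <= s -> Rabs (clamp s y - x) <= Rabs (y - x).
Proof. intros. unfold clamp, Rmax, Rmin. repeat destruct Rle_dec; unfold Rabs; repeat destruct Rcase_abs; lra. Qed.

Lemma const_of_zero_deriv (f : R -> R) s : 0 < s ->
  (forall t, 0 <= t <= s -> limit1_in (fun u => (f u - f t) / (u - t)) (Dom s t) 0 t) ->
  forall x, 0 <= x <= s -> f x = f 0.
Proof.
  intros Hs Hd.
  set (g := fun x => f (clamp s x)).
  assert (Hder : forall x, 0 < x < s -> derivable_pt_lim g x 0).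
  { intros x Hx eps Heps. destruct (Hd x ltac:(lra) eps Heps) as [alp [Halp H1]].
    assert (Hpos : 0 < Rmin alp (Rmin x (s - x))).
    { apply Rmin_glb_lt; auto. apply Rmin_glb_lt; lra. }
    exists (mkposreal _ Hpos). intros h Hh Hhd. simpl in Hhd.
    assert (Hm1 := Rmin_l alp (Rmin x (s - x))).
    assert (Hm2 := Rmin_r alp (Rmin x (s - x))).
    assert (Hm3 := Rmin_l x (s - x)). assert (Hm4 := Rmin_r x (s - x)).
    assert (Hrange : 0 <= x + h <= s).
    { unfold Rabs in Hhd; destruct Rcase_abs in Hhd; lra. }
    unfold g. rewrite !clamp_id by lra.
    specialize (H1 (x + h)). simpl in H1. unfold R_dist, Rdist in H1.
    replace ((f (x + h) - f x) / h - 0) with ((f (x + h) - f x) / (x + h - x) - 0).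
    apply H1. split. split. lra. intro; apply Hh; lra.
    replace (x + h - x) with h by ring. lra.
    replace (x + h - x) with h by ring. auto. }
  assert (Hcont : forall x, 0 <= x <= s -> continuity_pt g x).
  { intros x Hx eps Heps. destruct (Hd x Hx 1 ltac:(lra)) as [alp [Halp H1]].
    exists (Rmin alp eps). split. apply Rmin_glb_lt; auto.
    intros y [_ Hy]. simpl in *. unfold R_dist, Rdist in *.
    unfold g. rewrite (clamp_id s x Hx).
    assert (Hl := clamp_lip s x y Hx).
    assert (Hm1 := Rmin_l alp eps). assert (Hm2 := Rmin_r alp eps).
    destruct (Req_dec (clamp s y) x) as [E | E].
    - rewrite E. unfold Rminus. rewrite Rplus_opp_r, Rabs_R0. auto.
    - specialize (H1 (clamp s y)).
      assert (Hq : Rabs ((f (clamp s y) - f x) / (clamp s y - x) - 0) < 1).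
      { apply H1. split. split. apply clamp_in; lra. auto. lra. }
      rewrite Rminus_0_r in Hq. unfold Rdiv in Hq. rewrite Rabs_mult, Rabs_inv in Hq.
      assert (0 < Rabs (clamp s y - x)) by (apply Rabs_pos_lt; lra).
      assert (Rabs (f (clamp s y) - f x) < Rabs (clamp s y - x)).
      { apply (Rmult_lt_reg_r (/ Rabs (clamp s y - x))). apply Rinv_0_lt_compat; auto.
        rewrite Rinv_r by lra. auto. }
      lra. }
  set (pr := fun x (P : 0 < x < s) => exist (fun l => derivable_pt_lim g x l) 0 (Hder x P) : derivable_pt g x).
  assert (Hc := null_derivative_loc g 0 s pr Hcont).
  assert (H0 : forall x (P : 0 < x < s), derive_pt g x (pr x P) = 0).
  { intros. reflexivity. }
  specialize (Hc H0).
  intros x Hx. specialize (Hc x Hx). unfold g in Hc. rewrite !clamp_id in Hc; lra.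
Qed.

Lemma spectral_real n (H : Mat) : self_adjoint n H -> exists (V : nat -> Vec) (l : nat -> R),
  (forall k, (k < n)%nat -> vec_eq n (mvmul n H (V k)) (vscale (RtoC (l k)) (V k))) /\
  (forall k m, (k < n)%nat -> (m < n)%nat -> inner n (V k) (V m) = if Nat.eqb k m then C1 else C0) /\
  (forall i j, (i < n)%nat -> (j < n)%nat ->
     Csum n (fun k => Cmul (V k i) (Cconj (V k j))) = if Nat.eqb i j then C1 else C0).
Proof.
  intros Hs. destruct (spectral_decomp n H Hs) as [V [lam [He [Ho Hc]]]].
  exists V, (fun k => Re (lam k)). split; [|split]; auto.
  intros k Hk.
  assert (E : lam k = RtoC (Re (lam k))).
  { assert (E1 : inner n (V k) (mvmul n H (V k)) = lam k).
    { rewrite (inner_ext n (V k) (V k) _ (vscale (lam k) (V k))); [| intros ?; auto | apply He; auto].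
      rewrite inner_scal_r, Ho by auto. rewrite Nat.eqb_refl. cring. }
    assert (E2 : Cconj (inner n (V k) (mvmul n H (V k))) = inner n (V k) (mvmul n H (V k))).
    { rewrite inner_conj. symmetry. apply herm_inner; auto. }
    rewrite E1 in E2. apply Cext. reflexivity. unfold RtoC, Im; simpl.
    assert (Im (Cconj (lam k)) = Im (lam k)) by (rewrite E2; auto).
    unfold Cconj, Im in H0; simpl in H0. unfold Im. lra. }
  intros i Hi. rewrite He by auto. unfold vscale. rewrite <- E. auto.
Qed.

Lemma exp_formula n (H : Mat) (V : nat -> Vec) (l : nat -> R) E t :
  (forall k, (k < n)%nat -> vec_eq n (mvmul n H (V k)) (vscale (RtoC (l k)) (V k))) ->
  (forall i j, (i < n)%nat -> (j < n)%nat ->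
     Csum n (fun k => Cmul (V k i) (Cconj (V k j))) = if Nat.eqb i j then C1 else C0) ->
  is_mexp n (mscale (0, t) H) E ->
  forall i j, (i < n)%nat -> (j < n)%nat ->
    E i j = Csum n (fun k => Cmul (cexp (t * l k)) (Cmul (V k i) (Cconj (V k j)))).
Proof.
  intros He Hc HE i j Hi Hj.
  set (ej := fun m : nat => if Nat.eqb m j then C1 else C0).
  assert (E1 : E i j = mvmul n E ej i).
  { unfold mvmul, ej. rewrite <- (Csum_delta n j (E i) Hj). apply Csum_ext; intros.
    destruct (Nat.eqb k j); cring. }
  rewrite E1.
  rewrite (mvmul_ext n E ej (fun m => Csum n (fun k => Cmul (Cconj (V k j)) (V k m)))).
  - rewrite mvmul_comb. apply Csum_ext; intros k Hk.
    rewrite (exp_eig n H E t (V k) (l k) HE) by (auto; intros; apply He; auto). cring.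
  - intros m Hm. unfold ej. rewrite <- Hc by auto. apply Csum_ext; intros; cring.
Qed.

Lemma E_conj n (H : Mat) (E : R -> Mat) t :
  self_adjoint n H -> (forall t, is_mexp n (mscale (0, t) H) (E t)) ->
  forall i j, (i < n)%nat -> (j < n)%nat -> Cconj (E t i j) = E (- t) j i.
Proof.
  intros Hs HE i j Hi Hj.
  destruct (spectral_real n H Hs) as [V [l [He [Ho Hc]]]].
  rewrite (exp_formula n H V l (E t) t He Hc (HE t)) by auto.
  rewrite (exp_formula n H V l (E (-t)) (-t) He Hc (HE (-t))) by auto.
  rewrite <- Csum_conj. apply Csum_ext; intros k Hk.
  replace (- t * l k) with (- (t * l k)) by ring. rewrite cexp_opp. cring.
Qed.

Lemma F_herm n (H A : Mat) (E : R -> Mat) t :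
  self_adjoint n H -> self_adjoint n A -> (forall t, is_mexp n (mscale (0, t) H) (E t)) ->
  forall i j, (i < n)%nat -> (j < n)%nat ->
    Cconj (mmul n (mmul n (E t) A) (E (- t)) i j) = mmul n (mmul n (E t) A) (E (- t)) j i.
Proof.
  intros Hs HA HE i j Hi Hj. unfold mmul.
  rewrite <- Csum_conj.
  transitivity (Csum n (fun l => Csum n (fun k => Cmul (Cmul (E t j l) (A l k)) (E (- t) k i)))).
  - apply Csum_ext; intros l Hl. rewrite <- Csum_scal_r. rewrite <- Csum_conj.
    apply Csum_ext; intros k Hk.
    transitivity (Cmul (Cmul (Cconj (E t i k)) (Cconj (A k l))) (Cconj (E (- t) l j))). cring.
    rewrite (E_conj n H E t Hs HE i k) by auto.
    rewrite (E_conj n H E (- t) Hs HE l j) by auto.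
    rewrite Ropp_involutive. rewrite <- (HA l k) by auto. cring.
  - rewrite Csum_exch. apply Csum_ext; intros k Hk. rewrite Csum_scal_r. reflexivity.
Qed.

Lemma S_herm n W (H A S : Mat) :
  self_adjoint n H -> self_adjoint n A -> is_SDelta n W H A S ->
  forall i j, (i < n)%nat -> (j < n)%nat -> S i j = Cconj (S j i).
Proof.
  intros Hs HA [E [HE HI]] i j Hi Hj.
  destruct (HI i j Hi Hj) as [R1 I1]. destruct (HI j i Hj Hi) as [R2 I2].
  apply Cext; unfold Cconj, Re, Im; simpl.
  - eapply improper_unique; [apply R1 |]. eapply improper_ext; [| apply R2].
    intros t. cbv beta. rewrite <- (F_herm n H A E t Hs HA HE i j Hi Hj). reflexivity.
  - eapply improper_unique; [apply I1 |].
    eapply improper_ext; [| eapply improper_ext_v; [| apply (improper_scal (-1) _ _ I2)]].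
    2: (unfold Im; simpl; ring).
    intros t. cbv beta. rewrite <- (F_herm n H A E t Hs HA HE i j Hi Hj). unfold Cconj, Im; simpl. ring.
Qed.

Lemma inner_add_r n u v w : inner n u (fun m => Cadd (v m) (w m)) = Cadd (inner n u v) (inner n u w).
Proof. unfold inner. rewrite <- Csum_add. apply Csum_ext; intros; cring. Qed.

Lemma inner_self_im n v : Im (inner n v v) = 0.
Proof. unfold inner. rewrite Im_Csum. induction n. reflexivity. unfold Rsum; fold Rsum. rewrite IHn. unfold Cconj, Cmul, Im, Re; simpl. ring. Qed.

Lemma CD_mvmul s n (H H' : R -> Mat) (p p' : R -> Vec) t :
  (forall m j, (m < n)%nat -> (j < n)%nat -> CD s (fun u => H u m j) (fun u => H' u m j) t) ->
  (forall j, (j < n)%nat -> CD s (fun u => p u j) (fun u => p' u j) t) ->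
  forall m, (m < n)%nat ->
  CD s (fun u => mvmul n (H u) (p u) m) (fun u => Cadd (mvmul n (H' u) (p u) m) (mvmul n (H u) (p' u) m)) t.
Proof.
  intros HH Hp m Hm. unfold mvmul.
  eapply CD_ext_d; [| apply CD_Csum; intros j Hj; apply CD_mul; [apply HH | apply Hp]; auto].
  cbv beta. rewrite <- Csum_add. reflexivity.
Qed.

Lemma CD_inner s n (f f' g g' : R -> Vec) t :
  (forall m, (m < n)%nat -> CD s (fun u => f u m) (fun u => f' u m) t) ->
  (forall m, (m < n)%nat -> CD s (fun u => g u m) (fun u => g' u m) t) ->
  CD s (fun u => inner n (f u) (g u)) (fun u => Cadd (inner n (f' u) (g u)) (inner n (f u) (g' u))) t.
Proof.
  intros Hf Hg. unfold inner.
  eapply CD_ext_d; [| apply CD_Csum; intros m Hm; apply CD_mul; [apply CD_conj, Hf | apply Hg]; auto].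
  cbv beta. rewrite <- Csum_add. reflexivity.
Qed.

Lemma CD_inner_const s n (v : Vec) (g g' : R -> Vec) t :
  (forall m, (m < n)%nat -> CD s (fun u => g u m) (fun u => g' u m) t) ->
  CD s (fun u => inner n v (g u)) (fun u => inner n v (g' u)) t.
Proof.
  intros Hg. unfold inner.
  eapply CD_ext_d; [| apply CD_Csum; intros m Hm; apply CD_mul; [apply (CD_const s (Cconj (v m))) | apply Hg]; auto].
  cbv beta. apply Csum_ext; intros; cring.
Qed.

Lemma CD_unique s f d1 d2 t : 0 < s -> 0 <= t <= s -> CD s f d1 t -> CD s f d2 t -> d1 t = d2 t.
Proof. intros Hs Ht H1 H2. eapply Clim_unique; eauto. Qed.

Lemma inner_vnorm n v : vnorm2 n v = 1 -> inner n v v = C1.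
Proof. intros H. apply Cext. apply H. rewrite inner_self_im. reflexivity. Qed.

Lemma vec_nonzero_of_norm n v : inner n v v = C1 -> vec_nonzero n v.
Proof.
  intros H. destruct (Classical_Prop.classic (vec_nonzero n v)) as [Hv|Hv]; auto. exfalso.
  assert (inner n v v = C0).
  { unfold inner. apply Csum_zero. intros k Hk. destruct (Classical_Prop.classic (v k = C0)) as [E|E].
    rewrite E. cring. exfalso; apply Hv; exists k; auto. }
  rewrite H in H0. unfold C1, C0 in H0. injection H0. lra.
Qed.

Section Key.
Variables (n : nat) (s Delta : R) (W : R -> R) (H H' : R -> Mat) (Psi0 Psi0' : R -> Vec) (S : R -> Mat).
Hypothesis Hs : 0 < s.
Hypothesis HD : 0 < Delta.
Hypothesis HW : is_filter_function Delta W.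
Hypothesis Hsa : forall th, 0 <= th <= s -> self_adjoint n (H th).
Hypothesis HdH : mat_has_deriv_on n 0 s H H'.
Hypothesis HdP : vec_has_deriv_on n 0 s Psi0 Psi0'.
Hypothesis Hnorm : forall th, 0 <= th <= s -> vnorm2 n (Psi0 th) = 1.
Hypothesis Hgs : forall th, 0 <= th <= s -> unique_ground_state_with_gap n Delta (H th) (Psi0 th).
Hypothesis Hpt : forall th, 0 <= th <= s -> inner n (Psi0 th) (Psi0' th) = C0.
Hypothesis HS : forall th, 0 <= th <= s -> is_SDelta n W (H th) (H' th) (S th).

Definition ee (u : R) : C := inner n (Psi0 u) (mvmul n (H u) (Psi0 u)).

Lemma K1 u : 0 <= u <= s -> vec_eq n (mvmul n (H u) (Psi0 u)) (vscale (ee u) (Psi0 u)).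
Proof.
  intros Hu. destruct (Hgs u Hu) as [E0 [HE0 _]].
  assert (ee u = RtoC E0).
  { unfold ee. rewrite (inner_ext n _ (Psi0 u) _ _ (fun _ _ => eq_refl) HE0).
    rewrite inner_scal_r, inner_vnorm by auto. cring. }
  rewrite H0. auto.
Qed.

Lemma CD_H t : 0 <= t <= s -> forall m j, (m < n)%nat -> (j < n)%nat ->
  CD s (fun u => H u m j) (fun u => H' u m j) t.
Proof. intros Ht m j Hm Hj. apply C_deriv_CD; auto. Qed.

Lemma CD_P t : 0 <= t <= s -> forall j, (j < n)%nat ->
  CD s (fun u => Psi0 u j) (fun u => Psi0' u j) t.
Proof. intros Ht j Hj. apply C_deriv_CD; auto. Qed.

Lemma K2 t (v : Vec) (l E0 : R) : 0 <= t <= s ->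
  vec_eq n (mvmul n (H t) v) (vscale (RtoC l) v) ->
  vec_eq n (mvmul n (H t) (Psi0 t)) (vscale (RtoC E0) (Psi0 t)) ->
  l <> E0 ->
  inner n v (mvmul n (H' t) (Psi0 t)) = Cmul (RtoC (E0 - l)) (inner n v (Psi0' t)).
Proof.
  intros Ht Hv HE Hl.
  assert (Hsat := Hsa t Ht).
  assert (Horth : inner n v (Psi0 t) = C0).
  { assert (E1 : inner n v (mvmul n (H t) (Psi0 t)) = Cmul (RtoC E0) (inner n v (Psi0 t))).
    { rewrite (inner_ext n v v _ _ (fun _ _ => eq_refl) HE). apply inner_scal_r. }
    rewrite herm_inner in E1 by auto.
    rewrite (inner_ext n _ (vscale (RtoC l) v) _ (Psi0 t) Hv (fun _ _ => eq_refl)) in E1.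
    rewrite inner_scal_l in E1.
    assert (Cmul (RtoC (l - E0)) (inner n v (Psi0 t)) = C0).
    { transitivity (Csub (Cmul (Cconj (RtoC l)) (inner n v (Psi0 t))) (Cmul (RtoC E0) (inner n v (Psi0 t)))).
      cring. rewrite E1. cring. }
    destruct (Classical_Prop.classic (inner n v (Psi0 t) = C0)); auto.
    exfalso. apply Hl. assert (l - E0 = 0) by (eapply Cmul_cancel_real; eauto). lra. }
  assert (D1 : CD s (fun u => inner n v (mvmul n (H u) (Psi0 u)))
     (fun u => inner n v (fun m => Cadd (mvmul n (H' u) (Psi0 u) m) (mvmul n (H u) (Psi0' u) m))) t).
  { apply CD_inner_const. intros m Hm. apply CD_mvmul; auto. apply CD_H; auto. apply CD_P; auto. }
  assert (De : exists e', CD s ee e' t).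
  { eexists. unfold ee. apply CD_inner. apply CD_P; auto.
    intros m Hm. apply CD_mvmul; auto. apply CD_H; auto. apply CD_P; auto. }
  destruct De as [e' De].
  assert (Dg : CD s (fun u => inner n v (Psi0 u)) (fun u => inner n v (Psi0' u)) t).
  { apply CD_inner_const. apply CD_P; auto. }
  assert (D2 := CD_mul _ _ _ _ _ _ De Dg).
  assert (D2' : CD s (fun u => inner n v (mvmul n (H u) (Psi0 u)))
      (fun u => Cadd (Cmul (e' u) (inner n v (Psi0 u))) (Cmul (ee u) (inner n v (Psi0' u)))) t).
  { eapply CD_ext; [auto | | apply D2]. intros u Hu. cbv beta.
    symmetry. rewrite (inner_ext n v v _ _ (fun _ _ => eq_refl) (K1 u Hu)). apply inner_scal_r. }
  assert (Eq := CD_unique _ _ _ _ _ Hs Ht D1 D2'). cbv beta in Eq.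
  rewrite inner_add_r, Horth in Eq.
  assert (Hee : ee t = RtoC E0).
  { unfold ee. rewrite (inner_ext n _ (Psi0 t) _ _ (fun _ _ => eq_refl) HE).
    rewrite inner_scal_r, inner_vnorm by auto. cring. }
  rewrite Hee in Eq.
  assert (E2 : inner n v (mvmul n (H t) (Psi0' t)) = Cmul (RtoC l) (inner n v (Psi0' t))).
  { rewrite herm_inner by auto.
    rewrite (inner_ext n _ (vscale (RtoC l) v) _ (Psi0' t) Hv (fun _ _ => eq_refl)).
    rewrite inner_scal_l. cring. }
  rewrite E2 in Eq.
  transitivity (Csub (Cadd (inner n v (mvmul n (H' t) (Psi0 t))) (Cmul (RtoC l) (inner n v (Psi0' t)))) (Cmul (RtoC l) (inner n v (Psi0' t)))).
  cring. rewrite Eq. cring.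
Qed.


Lemma K4 t (v : Vec) (l E0 : R) : 0 <= t <= s ->
  vec_eq n (mvmul n (H t) v) (vscale (RtoC l) v) ->
  inner n v v = C1 ->
  vec_eq n (mvmul n (H t) (Psi0 t)) (vscale (RtoC E0) (Psi0 t)) ->
  (forall (E : C) (w : Vec), vec_nonzero n w -> vec_eq n (mvmul n (H t) w) (vscale E w) ->
      (exists c : C, vec_eq n w (vscale c (Psi0 t))) \/ E0 + Delta <= Re E) ->
  ~ (E0 + Delta <= l) ->
  l = E0 /\ inner n v (Psi0' t) = C0.
Proof.
  intros Ht Hv Hn HE Hgap Hl.
  assert (Hnz := vec_nonzero_of_norm n v Hn).
  destruct (Hgap (RtoC l) v Hnz Hv) as [[c Hc] | Hc]; [| exfalso; apply Hl; exact Hc].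
  split.
  - destruct Hnz as [m [Hm Hvm]].
    assert (E1 : mvmul n (H t) v m = Cmul (RtoC l) (v m)) by (apply Hv; auto).
    assert (E2 : mvmul n (H t) v m = Cmul (RtoC E0) (v m)).
    { rewrite (mvmul_ext n (H t) v (vscale c (Psi0 t)) m Hc).
      rewrite mvmul_vscale. rewrite HE by auto. rewrite Hc by auto. unfold vscale. cring. }
    assert (Cmul (RtoC (l - E0)) (v m) = C0).
    { transitivity (Csub (Cmul (RtoC l) (v m)) (Cmul (RtoC E0) (v m))). cring.
      rewrite <- E1, <- E2. cring. }
    assert (l - E0 = 0) by (eapply Cmul_cancel_real; eauto). lra.
  - rewrite (inner_ext n v (vscale c (Psi0 t)) (Psi0' t) (Psi0' t) Hc (fun _ _ => eq_refl)).
    rewrite inner_scal_l, Hpt by auto. cring.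
Qed.

Lemma Csub_zero x y : Csub x y = C0 -> x = y.
Proof. intros E. apply Cext; unfold Csub, C0, Re, Im in *; injection E; simpl; intros; lra. Qed.

Lemma K3 t : 0 <= t <= s -> forall i, (i < n)%nat ->
  mvmul n (S t) (Psi0 t) i = Cmul (0, -1) (Psi0' t i).
Proof.
  intros Ht i Hi.
  assert (Hodd : forall t, t <> 0 -> W (- t) = - W t).
  { destruct HW as [_ [_ [_ [_ [Ho _]]]]]. exact Ho. }
  destruct (Hgs t Ht) as [E0 [HE Hgap]].
  destruct (spectral_real n (H t) (Hsa t Ht)) as [V [l [He [Ho Hc]]]].
  destruct (HS t Ht) as [E [HEx HI]].
  set (a := fun k => inner n (V k) (mvmul n (H' t) (Psi0 t))).
  set (b := fun k => Cmul (a k) (V k i)).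
  set (mu := fun k => l k - E0).
  assert (C1 : Cimp W (fun tau => mvmul n (mmul n (mmul n (E tau) (H' t)) (E (- tau))) (Psi0 t) i)
                      (mvmul n (S t) (Psi0 t) i)).
  { unfold mvmul. apply Cimp_Csum. intros j Hj. destruct (HI i j Hi Hj) as [I1 I2].
    assert (Cij : Cimp W (fun tau => mmul n (mmul n (E tau) (H' t)) (E (- tau)) i j) (S t i j)) by (split; auto).
    eapply Cimp_ext; [| eapply Cimp_ext_v; [| apply (Cimp_scal W (Psi0 t j) _ _ Cij)]]; [intros; cring | cring]. }
  assert (G : forall tau, mvmul n (mmul n (mmul n (E tau) (H' t)) (E (- tau))) (Psi0 t) i =
                          Csum n (fun k => Cmul (b k) (cexp (tau * mu k)))).
  { intros tau. rewrite mvmul_mmul.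
    rewrite (mvmul_ext n _ (mvmul n (E (- tau)) (Psi0 t)) (vscale (cexp (- tau * E0)) (Psi0 t))).
    2: { intros m Hm. apply (exp_eig n (H t) (E (- tau)) (- tau) (Psi0 t) E0 (HEx (- tau))); auto;
         intros; apply HE; auto. }
    rewrite mvmul_vscale, mvmul_mmul.
    rewrite (mvmul_ext n (E tau) (mvmul n (H' t) (Psi0 t)) (fun m => Csum n (fun k => Cmul (a k) (V k m)))).
    2: { intros m Hm. apply expand; auto. }
    rewrite mvmul_comb. rewrite <- Csum_scal_l. apply Csum_ext; intros k Hk.
    rewrite (exp_eig n (H t) (E tau) tau (V k) (l k) (HEx tau)) by (auto; intros; apply He; auto).
    unfold b, mu. replace (tau * (l k - E0)) with (- tau * E0 + tau * l k) by ring.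
    rewrite <- cexp_add. cring. }
  assert (Hne : forall k, (k < n)%nat -> ~ (E0 + Delta <= l k) -> l k = E0 /\ inner n (V k) (Psi0' t) = C0).
  { intros k Hk Hkl. apply (K4 t (V k) (l k) E0); auto.
    rewrite Ho by auto. rewrite Nat.eqb_refl. auto. }
  assert (CX : Cimp W (fun tau => Csum n (fun k => if Rle_dec (E0 + Delta) (l k) then Cmul (b k) (cexp (tau * mu k)) else C0))
                      (Csum n (fun k => if Rle_dec (E0 + Delta) (l k) then Cmul (b k) (0, / mu k) else C0))).
  { apply Cimp_Csum; intros k Hk. destruct (Rle_dec (E0 + Delta) (l k)).
    - apply Cimp_fourier with (Delta := Delta); auto. unfold mu; lra.
    - apply Cimp_zero. }
  assert (Cg : Cimp W (fun tau => Csum n (fun k => if Rle_dec (E0 + Delta) (l k) then C0 else b k))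
        (Csub (mvmul n (S t) (Psi0 t) i) (Csum n (fun k => if Rle_dec (E0 + Delta) (l k) then Cmul (b k) (0, / mu k) else C0)))).
  { eapply Cimp_ext; [| apply (Cimp_sub _ _ _ _ _ C1 CX)]. intros tau. cbv beta. rewrite G.
    rewrite <- Csum_sub. apply Csum_ext; intros k Hk. destruct (Rle_dec (E0 + Delta) (l k)).
    - cring.
    - destruct (Hne k Hk n0) as [El _]. unfold mu. rewrite El.
      replace (tau * (E0 - E0)) with 0 by ring. rewrite cexp_0. cring. }
  assert (Z := Cimp_const_zero W _ _ Hodd Cg). apply Csub_zero in Z. rewrite Z.
  rewrite (expand n V (Psi0' t) i Hc Hi). rewrite <- Csum_scal_l. apply Csum_ext; intros k Hk.
  destruct (Rle_dec (E0 + Delta) (l k)).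
  - assert (Ha : a k = Cmul (RtoC (E0 - l k)) (inner n (V k) (Psi0' t))).
    { unfold a. apply K2; auto. lra. }
    unfold b, mu. rewrite Ha. assert (l k - E0 <> 0) by lra.
    apply Cext; cunf; field; auto.
  - destruct (Hne k Hk n0) as [_ Hz]. rewrite Hz. cring.
Qed.

End Key.

Lemma Hprime_herm n s (H H' : R -> Mat) t : 0 < s -> 0 <= t <= s ->
  (forall th, 0 <= th <= s -> self_adjoint n (H th)) ->
  mat_has_deriv_on n 0 s H H' -> self_adjoint n (H' t).
Proof.
  intros Hs Ht Hsa Hd i j Hi Hj.
  assert (D1 : CD s (fun u => H u i j) (fun u => H' u i j) t) by (apply C_deriv_CD; auto).
  assert (D2 : CD s (fun u => Cconj (H u j i)) (fun u => Cconj (H' u j i)) t).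
  { apply CD_conj. apply C_deriv_CD; auto. }
  assert (D3 : CD s (fun u => H u i j) (fun u => Cconj (H' u j i)) t).
  { eapply CD_ext; [auto | | apply D2]. intros u Hu. symmetry. apply Hsa; auto. }
  apply (CD_unique _ _ _ _ _ Hs Ht D1 D3).
Qed.

Lemma mvmul_sub n A v w i : mvmul n A (fun m => Csub (v m) (w m)) i = Csub (mvmul n A v i) (mvmul n A w i).
Proof. unfold mvmul. rewrite <- Csum_sub. apply Csum_ext; intros; cring. Qed.

Lemma inner_zero_vec n v : Re (inner n v v) = 0 -> forall m, (m < n)%nat -> v m = C0.
Proof.
  unfold inner. rewrite Re_Csum. induction n; intros H m Hm. lia.
  unfold Rsum in H; fold Rsum in H.
  assert (Hpos : forall k, 0 <= Rsum k (fun i => Re (Cmul (Cconj (v i)) (v i)))).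
  { induction k. simpl; lra. unfold Rsum; fold Rsum.
    assert (0 <= Re (Cmul (Cconj (v k)) (v k))).
    { unfold Cmul, Cconj, Re, Im; simpl. nra. } lra. }
  assert (Ht : Re (Cmul (Cconj (v n)) (v n)) = fst (v n) * fst (v n) + snd (v n) * snd (v n)).
  { unfold Cmul, Cconj, Re, Im; simpl. ring. }
  assert (H1 := Hpos n). rewrite Ht in H.
  assert (fst (v n) * fst (v n) + snd (v n) * snd (v n) = 0) by nra.
  assert (Rsum n (fun i => Re (Cmul (Cconj (v i)) (v i))) = 0) by nra.
  destruct (Nat.eq_dec m n).
  - subst. destruct (v n) as [x y]. simpl in H0. unfold C0. f_equal; nra.
  - apply IHn; auto. lia.
Qed.

Theorem mainTheorem3
  (n : nat) (s Delta : R) (W : R -> R)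
  (H H' : R -> Mat) (Psi0 Psi0' : R -> Vec) (U U' S : R -> Mat) :
  0 < Delta ->
  is_filter_function Delta W ->
  (forall th, 0 <= th <= s -> self_adjoint n (H th)) ->
  mat_has_deriv_on n 0 s H H' ->
  vec_has_deriv_on n 0 s Psi0 Psi0' ->
  (forall th, 0 <= th <= s -> vnorm2 n (Psi0 th) = 1) ->
  (forall th, 0 <= th <= s -> unique_ground_state_with_gap n Delta (H th) (Psi0 th)) ->
  (forall th, 0 <= th <= s -> inner n (Psi0 th) (Psi0' th) = C0) ->
  (forall th, 0 <= th <= s -> is_SDelta n W (H th) (H' th) (S th)) ->
  mat_has_deriv_on n 0 s U U' ->
  (forall th, 0 <= th <= s -> mat_eq n (U' th) (mmul n (mscale Ci (S th)) (U th))) ->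
  mat_eq n (U 0) mid ->
  forall th, 0 <= th <= s -> vec_eq n (Psi0 th) (mvmul n (U th) (Psi0 0)).
Proof.
  intros HD HW Hsa HdH HdP Hnorm Hgs Hpt HS HdU HU' HU0 th Hth.
  destruct (Req_dec s 0) as [Es | Ns].
  - assert (th = 0) by lra. subst th. intros m Hm.
    rewrite (mvmul_ext_m n (U 0) mid) by auto. rewrite mvmul_mid; auto.
  assert (Hs : 0 < s) by lra.
  set (phi := fun u m => Csub (Psi0 u m) (mvmul n (U u) (Psi0 0) m)).
  set (phi' := fun u m => Csub (Psi0' u m) (mvmul n (U' u) (Psi0 0) m)).
  assert (Dphi : forall t, 0 <= t <= s -> forall m, (m < n)%nat -> CD s (fun u => phi u m) (fun u => phi' u m) t).
  { intros t Ht m Hm. unfold phi, phi'. apply CD_sub. apply C_deriv_CD; auto.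
    eapply CD_ext_d; [| apply (CD_mvmul s n U U' (fun _ => Psi0 0) (fun _ _ => C0) t)]; auto.
    - cbv beta. unfold mvmul at 2. rewrite (Csum_zero n (fun k => Cmul (U t m k) C0)) by (intros; cring). cring.
    - intros; apply C_deriv_CD; auto.
    - intros; apply CD_const. }
  set (F := fun u => inner n (phi u) (phi u)).
  assert (DF : forall t, 0 <= t <= s -> CD s F (fun _ => C0) t).
  { intros t Ht. eapply CD_ext_d; [| apply (CD_inner s n phi phi' phi phi' t); apply Dphi; auto].
    cbv beta.
    assert (Sh : self_adjoint n (S t)).
    { intros i j Hi Hj. apply (S_herm n W (H t) (H' t) (S t)); auto.
      apply (Hprime_herm n s H H' t); auto. }
    assert (Eq : vec_eq n (phi' t) (vscale Ci (mvmul n (S t) (phi t)))).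
    { intros m Hm. unfold phi', phi, vscale. rewrite mvmul_sub.
      rewrite (mvmul_ext_m n (U' t) _ (Psi0 0) m Hm (HU' t Ht)).
      rewrite mvmul_mmul.
      unfold mvmul at 2. unfold mscale.
      rewrite (K3 n s Delta W H H' Psi0 Psi0' S Hs HD HW Hsa HdH HdP Hnorm Hgs Hpt HS t Ht m Hm).
      transitivity (Csub (Psi0' t m) (Cmul Ci (Csum n (fun k => Cmul (S t m k) (mvmul n (U t) (Psi0 0) k))))).
      - f_equal. unfold mvmul. rewrite <- Csum_scal_l. apply Csum_ext; intros; cring.
      - change (mvmul n (S t) (mvmul n (U t) (Psi0 0)) m) with (Csum n (fun k => Cmul (S t m k) (mvmul n (U t) (Psi0 0) k))). cring. }
    rewrite (inner_ext n (phi' t) (vscale Ci (mvmul n (S t) (phi t))) (phi t) (phi t) Eq (fun _ _ => eq_refl)).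
    rewrite (inner_ext n (phi t) (phi t) (phi' t) (vscale Ci (mvmul n (S t) (phi t))) (fun _ _ => eq_refl) Eq).
    rewrite inner_scal_l, inner_scal_r. rewrite <- herm_inner by auto. cring. }
  assert (Hc := const_of_zero_deriv (fun u => Re (F u)) s Hs).
  assert (HF : Re (F th) = Re (F 0)).
  { apply Hc; auto. intros t Ht. destruct (DF t Ht) as [D1 _].
    eapply limit1_in_ext; [| apply D1]. intros u [_ Hu]. cbv beta. cunf. unfold Rdiv. ring. }
  assert (HF0 : Re (F 0) = 0).
  { unfold F. rewrite (inner_ext n (phi 0) (fun _ => C0) (phi 0) (fun _ => C0)).
    - unfold inner. rewrite Csum_zero; auto. intros; cring.
    - intros m Hm. unfold phi. rewrite (mvmul_ext_m n (U 0) mid) by auto. rewrite mvmul_mid by auto. cring.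
    - intros m Hm. unfold phi. rewrite (mvmul_ext_m n (U 0) mid) by auto. rewrite mvmul_mid by auto. cring. }
  rewrite HF0 in HF.
  intros m Hm. apply Csub_zero. apply (inner_zero_vec n (phi th)); auto.
Qed.
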